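(* In any falsifiable Outcome Logic instance, for every outcome assertion $\varphi$ containing no implications and all $m_1,m_2\in M\Sigma$ with $m_1\diamond m_2$ defined: if $m_1\diamond m_2\vDash\varphi$, then there exist outcome assertions $\varphi_1,\varphi_2$ with $m_1\vDash\varphi_1$, $m_2\vDash\varphi_2$, and $\varphi_1\oplus\varphi_2\Rightarrow\varphi$.
   Context: OL instance: execution model $\langle M,\mathsf{bind},\mathsf{unit},\diamond,\varnothing\rangle$ (monad on sets, with each $(MA,\diamond,\varnothing)$ a partial commutative monoid preserved by $\mathsf{bind}$), program states $\Sigma$, atomic commands $[\![c]\!]\colon\Sigma\to M\Sigma$, atomic assertions with relation $\vDash_{\mathsf{atom}}\subseteq M\Sigma\times\mathsf{Prop}$. Programs $C::=\mathbb{0}\mid\mathbb{1}\mid C_1;C_2\mid C_1+C_2\mid C^\star\mid c$ with the standard monadic semantics ($\mathbb{0}\mapsto\varnothing$, $\mathbb{1}\mapsto\mathsf{unit}$, sequencing by $\mathsf{bind}$, $+$ by $\diamond$, $C^\star$ as least fixed point of $f\mapsto\lambda\sigma.f^\dagger([\![C]\!](\sigma))\diamond\mathsf{unit}(\sigma)$), $[\![C]\!]^\dagger(m)=\mathsf{bind}(m,[\![C]\!])$. Outcome assertions: $\top,\bot,\top^\oplus$ (only $\varnothing$), classical $\land$ and $\Rightarrow$, atomic $P$, and $\oplus$ ($m\vDash\varphi\oplus\psi$ iff $m=m_1\diamond m_2$ with $m_1\vDash\varphi$, $m_2\vDash\psi$); $\lnot\varphi=\varphi\Rightarrow\bot$;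 ''no implications'' means $\Rightarrow$ (hence $\lnot$) does not occur. $\varphi\Rightarrow\psi$ as a proposition means every $m$ satisfying $\varphi$ satisfies $\psi$; $\vDash\langle\varphi\rangle C\langle\psi\rangle$ iff $m\vDash\varphi$ implies $[\![C]\!]^\dagger(m)\vDash\psi$. The instance is falsifiable if: (1a) $m_1\diamond m_2=\varnothing$ implies $m_1=m_2=\varnothing$; (1b) if $m_1\diamond m_2=n_1\diamond n_2$ then there exist $s_1,s_2,t_1,t_2$ with $s_1\diamond s_2=n_1$, $t_1\diamond t_2=n_2$, $s_1\diamond t_1=m_1$, $s_2\diamond t_2=m_2$; (2) for every atomic $P$, if $m_1\diamond m_2\vDash P$ then there are $\varphi_1,\varphi_2$ with $m_1\vDash\varphi_1$, $m_2\vDash\varphi_2$, $\varphi_1\oplus\varphi_2\Rightarrow P$; (3) for atomic $Q_1,\dots,Q_n$, $m\not\vDash Q_1\oplus\cdots\oplus Q_n$ iff there is an implication-free $\psi$ with $m\vDash\psi$ and $\psi\Rightarrow\lnot(Q_1\oplus\cdots\oplus Q_n)$; (4) for every atomic command $c$ and implication-free $\psi$, if $[\![c]\!]^\dagger(m)\vDash\psi$ then there is an implication-free $\varphi$ with $m\vDash\varphi$ and $\vDash\langle\varphi\rangle c\langle\psi\rangle$. *)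

(* Defs.v *)
From Stdlib Require Import List.
Set Implicit Arguments.

(* Partial composition is modelled as an option-valued operation:
   [pcm_op m1 m2 = Some m] means "m1 <> m2 is defined and equals m". *)
Definition obind {A B : Type} (o : option A) (f : A -> option B) : option B :=
  match o with Some a => f a | None => None end.

Record OLInstance := {
  M : Type -> Type;
  bind : forall {A B : Type}, M A -> (A -> M B) -> M B;
  unit : forall {A : Type}, A -> M A;
  pcm_op : forall {A : Type}, M A -> M A -> option (M A);
  pcm_zero : forall {A : Type}, M A;
  bind_unit_l : forall A B (a : A) (f : A -> M B), bind (unit a) f = f a;
  bind_unit_r : forall A (m : M A), bind m unit = m;
  bind_assoc : forall A B C (m : M A) (f : A -> M B) (g : B -> M C),
      bind (bind m f) g = bind m (fun x => bind (f x) g);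
  pcm_comm : forall A (a b : M A), pcm_op a b = pcm_op b a;
  pcm_assoc : forall A (a b c : M A),
      obind (pcm_op a b) (fun ab => pcm_op ab c)
      = obind (pcm_op b c) (fun bc => pcm_op a bc);
  pcm_unit : forall A (a : M A), pcm_op a pcm_zero = Some a;
  bind_op : forall A B (m1 m2 m : M A) (f : A -> M B),
      pcm_op m1 m2 = Some m -> pcm_op (bind m1 f) (bind m2 f) = Some (bind m f);
  bind_zero : forall A B (f : A -> M B), bind (@pcm_zero A) f = pcm_zero;
  State : Type;
  Cmd : Type;
  sem_cmd : Cmd -> State -> M State;
  Atom : Type;
  sat_atom : M State -> Atom -> Prop
}.

Arguments bind {_ _ _}.
Arguments unit {_ _}.
Arguments pcm_op {_ _}.
Arguments pcm_zero {_ _}.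

Inductive assn (Atom : Type) : Type :=
| ATop | ABot | ATopPlus
| AAnd (p q : assn Atom)
| AImp (p q : assn Atom)
| AAtom (P : Atom)
| AOplus (p q : assn Atom).

Arguments ATop {Atom}. Arguments ABot {Atom}. Arguments ATopPlus {Atom}.

Definition ANot {Atom} (p : assn Atom) : assn Atom := AImp p ABot.

Fixpoint sat (I : OLInstance) (m : M I (State I)) (p : assn (Atom I)) : Prop :=
  match p with
  | ATop => True
  | ABot => False
  | ATopPlus => m = pcm_zero
  | AAnd p q => sat I m p /\ sat I m q
  | AImp p q => sat I m p -> sat I m q
  | AAtom P => sat_atom I m P
  | AOplus p q => exists m1 m2, pcm_op m1 m2 = Some m /\ sat I m1 p /\ sat I m2 q
  end.

(* "phi => psi" as a proposition: semantic entailment *)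
Definition entails (I : OLInstance) (p q : assn (Atom I)) : Prop :=
  forall m, sat I m p -> sat I m q.

Fixpoint no_imp {Atom} (p : assn Atom) : Prop :=
  match p with
  | ATop | ABot | ATopPlus | AAtom _ => True
  | AAnd p q | AOplus p q => no_imp p /\ no_imp q
  | AImp _ _ => False
  end.

Definition lift_sem (I : OLInstance) (c : Cmd I) (m : M I (State I)) : M I (State I) :=
  bind m (sem_cmd I c).

Definition valid_triple (I : OLInstance) (p : assn (Atom I)) (c : Cmd I)
  (q : assn (Atom I)) : Prop :=
  forall m, sat I m p -> sat I (lift_sem I c m) q.

(* Q1 (+) ... (+) Qn, n >= 1, right-nested *)
Fixpoint oplus_atoms {Atom} (Q : Atom) (Qs : list Atom) : assn Atom :=
  match Qs with
  | nil => AAtom Q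
  | Q' :: Qs' => AOplus (AAtom Q) (oplus_atoms Q' Qs')
  end.

Record falsifiable (I : OLInstance) : Prop := {
  fals_1a : forall m1 m2 : M I (State I),
      pcm_op m1 m2 = Some pcm_zero -> m1 = pcm_zero /\ m2 = pcm_zero;
  fals_1b : forall m1 m2 n1 n2 m : M I (State I),
      pcm_op m1 m2 = Some m -> pcm_op n1 n2 = Some m ->
      exists s1 s2 t1 t2,
        pcm_op s1 s2 = Some n1 /\ pcm_op t1 t2 = Some n2 /\
        pcm_op s1 t1 = Some m1 /\ pcm_op s2 t2 = Some m2;
  fals_2 : forall (P : Atom I) (m1 m2 m : M I (State I)),
      pcm_op m1 m2 = Some m -> sat_atom I m P ->
      exists p1 p2, sat I m1 p1 /\ sat I m2 p2 /\ entails I (AOplus p1 p2) (AAtom P);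
  fals_3 : forall (Q : Atom I) (Qs : list (Atom I)) (m : M I (State I)),
      ~ sat I m (oplus_atoms Q Qs) <->
      exists psi, no_imp psi /\ sat I m psi /\ entails I psi (ANot (oplus_atoms Q Qs));
  fals_4 : forall (c : Cmd I) (psi : assn (Atom I)) (m : M I (State I)),
      no_imp psi -> sat I (lift_sem I c m) psi ->
      exists phi, no_imp phi /\ sat I m phi /\ valid_triple I phi c psi
}.

(* Main.v *)
Require Import Defs.

Section H.
Variable I : OLInstance.
Notation op := (@pcm_op I (State I)).

Lemma assocL (a b c ab r : M I (State I)) :
  op a b = Some ab -> op ab c = Some r -> exists bc, op b c = Some bc /\ op a bc = Some r.
Proof.
  intros H1 H2. pose proof (pcm_assoc I (State I) a b c) as E.
  rewrite H1 in E. simpl in E. rewrite H2 in E.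
  destruct (op b c) as [bc|] eqn:Hbc; simpl in E; [|discriminate].
  exists bc; auto.
Qed.

Lemma assocR (a b c bc r : M I (State I)) :
  op b c = Some bc -> op a bc = Some r -> exists ab, op a b = Some ab /\ op ab c = Some r.
Proof.
  intros H1 H2. pose proof (pcm_assoc I (State I) a b c) as E.
  rewrite H1 in E. simpl in E. rewrite H2 in E.
  destruct (op a b) as [ab|] eqn:Hab; simpl in E; [|discriminate].
  exists ab; auto.
Qed.

Lemma interchange (a1 a2 b1 b2 a b m' : M I (State I)) :
  op a1 a2 = Some a -> op b1 b2 = Some b -> op a b = Some m' ->
  exists c d, op a1 b1 = Some c /\ op a2 b2 = Some d /\ op c d = Some m'.
Proof.
  intros Ha Hb Hm.
  destruct (assocL _ _ _ _ _ Ha Hm) as [y [Hy1 Hy2]].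
  destruct (assocR _ _ _ _ _ Hb Hy1) as [z [Hz1 Hz2]].
  rewrite pcm_comm in Hz1.
  destruct (assocL _ _ _ _ _ Hz1 Hz2) as [d [Hd1 Hd2]].
  destruct (assocR _ _ _ _ _ Hd2 Hy2) as [c [Hc1 Hc2]].
  exists c, d; auto.
Qed.
End H.

Theorem lemmaD3 (I : OLInstance) (HF : falsifiable I) (phi : assn (Atom I)) :
  no_imp phi ->
  forall m1 m2 m : M I (State I),
    pcm_op m1 m2 = Some m ->
    sat I m phi ->
    exists phi1 phi2 : assn (Atom I),
      sat I m1 phi1 /\ sat I m2 phi2 /\ entails I (AOplus phi1 phi2) phi.
Proof.
  induction phi as [| | |p IHp q IHq|p IHp q IHq|P|p IHp q IHq]; simpl;
    intros Hni m1 m2 m Hop Hs.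
  - exists ATop, ATop. simpl. repeat split; intros; exact Logic.I.
  - contradiction.
  - subst m. destruct (fals_1a HF _ _ Hop) as [-> ->].
    exists ATopPlus, ATopPlus. simpl. repeat split.
    intros m' [x [y [Hxy [-> ->]]]]. simpl.
    rewrite pcm_unit in Hxy. congruence.
  - destruct Hni as [Np Nq]. destruct Hs as [Sp Sq].
    destruct (IHp Np _ _ _ Hop Sp) as [p1 [p2 [A1 [A2 A3]]]].
    destruct (IHq Nq _ _ _ Hop Sq) as [q1 [q2 [B1 [B2 B3]]]].
    exists (AAnd p1 q1), (AAnd p2 q2). simpl. repeat split; auto.
    + apply A3. destruct H as [x [y [H1 [[H2 _] [H3 _]]]]]. simpl; eauto 6.
    + apply B3. destruct H as [x [y [H1 [[_ H2] [_ H3]]]]]. simpl; eauto 6.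
  - contradiction.
  - eapply (fals_2 HF); eassumption.
  - destruct Hni as [Np Nq]. destruct Hs as [n1 [n2 [Hn [S1 S2]]]].
    destruct (fals_1b HF _ _ _ _ Hop Hn) as [s1 [s2 [t1 [t2 [E1 [E2 [E3 E4]]]]]]].
    destruct (IHp Np _ _ _ E1 S1) as [p1 [p2 [A1 [A2 A3]]]].
    destruct (IHq Nq _ _ _ E2 S2) as [q1 [q2 [B1 [B2 B3]]]].
    exists (AOplus p1 q1), (AOplus p2 q2). simpl. split; [eauto 7|split; [eauto 7|]].
    intros m' [a [b [Hab [[a1 [a2 [Ha [Sa1 Sa2]]]] [b1 [b2 [Hb [Sb1 Sb2]]]]]]]].
    destruct (interchange I _ _ _ _ _ _ _ Ha Hb Hab) as [c [d [Hc [Hd Hcd]]]].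
    simpl. exists c, d. split; [exact Hcd|split].
    + apply A3. simpl; eauto 6.
    + apply B3. simpl; eauto 6.
Qed.
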